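(* For all $n\ge 2$, $|F_n(321,2134)|=n^2-3n+4$.
   Context: A permutation $\pi$ avoids a classical pattern $p\in S_k$ if no subsequence of $\pi$ of length $k$ is order-isomorphic to $p$. A Fishburn permutation is a permutation $\pi=\pi_1\cdots\pi_n$ of $[n]$ for which there are no indices $i<j$ with $\pi_j<\pi_i<\pi_{i+1}$ and $\pi_i=\pi_j+1$. $F_n(\sigma_1,\dots,\sigma_k)$ denotes the set of Fishburn permutations of length $n$ avoiding each of the classical patterns $\sigma_1,\dots,\sigma_k$. *)

(* Defs.v *)
From mathcomp Require Import all_boot all_order all_fingroup.
Set Implicit Arguments. Unset Strict Implicit. Unset Printing Implicit Defensive.

(* Permutations of [n] are {perm 'I_n}; positions and values are 0-based
   (the shift by one does not affect any of the conditions below). *)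

Definition fishburn n (s : {perm 'I_n}) : bool :=
  ~~ [exists i : 'I_n, exists j : 'I_n, exists k : 'I_n,
        [&& i < j, (k : nat) == i.+1,
            s j < s i, s i < s k
          & (s i : nat) == (s j).+1]].

(* s contains the classical pattern p, given in one-line notation as the
   sequence of its values p_1 ... p_k (a permutation of 1..k): there are
   positions f 0 < f 1 < ... < f (k-1) with s (f a) < s (f b) iff p_a < p_b. *)
Definition contains n (s : {perm 'I_n}) (p : seq nat) : bool :=
  [exists f : {ffun 'I_(size p) -> 'I_n},
     [forall a : 'I_(size p), forall b : 'I_(size p),
        ((a < b) ==> (f a < f b)) &&
        ((s (f a) < s (f b)) == (nth 0 p a < nth 0 p b))]].

Definition avoids n (s : {perm 'I_n}) (p : seq nat) : bool := ~~ contains s p.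

Definition F_321_2134 n : {set {perm 'I_n}} :=
  [set s | [&& fishburn s, avoids s [:: 3; 2; 1] & avoids s [:: 2; 1; 3; 4]]].

(* Main.v *)
Require Import Defs.
From mathcomp Require Import all_boot all_order all_fingroup.
From mathcomp Require Import zify.
Set Implicit Arguments. Unset Strict Implicit. Unset Printing Implicit Defensive.

Definition N321 n (h : nat -> nat) := forall i j k, i < j -> j < k -> k < n -> ~ (h k < h j /\ h j < h i).
Definition N2134 n (h : nat -> nat) := forall i j k l, i < j -> j < k -> k < l -> l < n ->
   ~ (h j < h i /\ h i < h k /\ h k < h l).
Definition Nfish n (h : nat -> nat) := forall i j, i < j -> j < n -> i.+1 < n ->
   ~ (h j < h i /\ h i < h i.+1 /\ h i = (h j).+1).

Lemma gen_avoid n (F : nat -> nat) m t :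
  (forall i, i < n -> F i < n) -> t < n -> F t = n - 1 ->
  (forall i j, i < j -> j < n -> F j < F i -> i = m \/ i = t) ->
  (forall k l, m < k -> k < l -> l < n -> F m < F k -> F m < F l -> F l < F k) ->
  (t = m \/ (m < t /\ F m < F t)) ->
  N321 n F /\ N2134 n F.
Proof.
move=> rg tn Ft desc big mt; split.
- move=> i j k ij jk kn [h1 h2].
  case: (desc i j ij (ltn_trans jk kn) h2) => ei; case: (desc j k jk kn h1) => ej;
  subst i j; lia.
- move=> i j k l ij jk kl ln [h1 [h2 h3]].
  have := rg k ltac:(lia).
  case: (desc i j ij ltac:(lia) h1) => ei; subst i.
  + have := big k l ltac:(lia) kl ln h2 ltac:(lia). lia.
  + lia.
Qed.

Definition mkp n (F : nat -> nat) : {perm 'I_n} :=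
  insubd (1%g : {perm 'I_n}) ([ffun i : 'I_n => (insubd i (F i) : 'I_n)] : {ffun 'I_n -> 'I_n}).

Lemma mkpE n (F : nat -> nat) :
  (forall i, i < n -> F i < n) -> (forall i j, i < n -> j < n -> F i = F j -> i = j) ->
  forall o : 'I_n, val (mkp n F o) = F o.
Proof.
move=> rg inj o.
have vE : forall x : 'I_n, val (insubd x (F x)) = F x.
  by move=> x; rewrite val_insubd rg.
have ib : injectiveb ([ffun i : 'I_n => (insubd i (F i) : 'I_n)] : {ffun 'I_n -> 'I_n}).
  apply/injectiveP => x y; rewrite !ffunE => /(congr1 val); rewrite !vE.
  by move/inj => h; apply: val_inj; apply: h.
by rewrite /mkp -pvalE val_insubd ib ffunE vE.
Qed.

Definition hs n (s : {perm 'I_n}) (i : nat) : nat :=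
  if (insub i : option 'I_n) is Some o then val (s o) else 0.

Lemma hsE n (s : {perm 'I_n}) (o : 'I_n) : hs s o = nat_of_ord (s o).
Proof. by rewrite /hs valK. Qed.

Lemma hsO n (s : {perm 'I_n}) i (H : i < n) : hs s i = nat_of_ord (s (Ordinal H)).
Proof. exact: (hsE s (Ordinal H)). Qed.

Lemma hs_range n (s : {perm 'I_n}) i : i < n -> hs s i < n.
Proof. by move=> H; rewrite (hsO s H); apply: ltn_ord. Qed.

Lemma hs_inj n (s : {perm 'I_n}) i j : i < n -> j < n -> hs s i = hs s j -> i = j.
Proof.
move=> Hi Hj; rewrite (hsO s Hi) (hsO s Hj) => /val_inj/perm_inj.
by move/(congr1 val).
Qed.

Lemma hs_surj n (s : {perm 'I_n}) v : v < n -> exists2 j, j < n & hs s j = v.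
Proof.
move=> Hv; exists (val ((s^-1)%g (Ordinal Hv))); first exact: ltn_ord.
by rewrite hsE permKV.
Qed.

Section Conv.
Variable n : nat.
Implicit Type s : {perm 'I_n}.

Lemma avoid321 s : N321 n (hs s) -> avoids s [:: 3; 2; 1].
Proof.
move=> H; apply/negP => /existsP [f /forallP Hf].
have P := fun a b => forallP (Hf a) b.
pose o0 : 'I_3 := @Ordinal 3 0 isT.
pose o1 : 'I_3 := @Ordinal 3 1 isT.
pose o2 : 'I_3 := @Ordinal 3 2 isT.
have := P o0 o1; have := P o1 o2; have := P o1 o0; have := P o2 o1.
have := H (f o0) (f o1) (f o2); rewrite !hsE /= => HH.
have := ltn_ord (f o2).
move: HH; move: (f o0) (f o1) (f o2) => a b c. lia.
Qed.

Lemma avoid2134 s : N2134 n (hs s) -> avoids s [:: 2; 1; 3; 4].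
Proof.
move=> H; apply/negP => /existsP [f /forallP Hf].
have P := fun a b => forallP (Hf a) b.
pose o0 : 'I_4 := @Ordinal 4 0 isT.
pose o1 : 'I_4 := @Ordinal 4 1 isT.
pose o2 : 'I_4 := @Ordinal 4 2 isT.
pose o3 : 'I_4 := @Ordinal 4 3 isT.
have := P o0 o1; have := P o1 o2; have := P o2 o3; have := P o1 o0; have := P o0 o2; have := P o2 o3.
have := H (f o0) (f o1) (f o2) (f o3); rewrite !hsE /= => HH.
have := ltn_ord (f o3).
move: HH; move: (f o0) (f o1) (f o2) (f o3) => a b c d. lia.
Qed.

Lemma fish_of s : Nfish n (hs s) -> fishburn s.
Proof.
move=> H; apply/negP => /existsP [i /existsP [j /existsP [k /and5P [h1 /eqP h2 h3 h4 /eqP h5]]]].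
have := H i j h1 (ltn_ord j); rewrite -h2 !hsE => HH.
have := ltn_ord k.
lia.
Qed.

End Conv.

Section Conv2.
Variable n : nat.
Implicit Type s : {perm 'I_n}.

Lemma N321_of s : avoids s [:: 3; 2; 1] -> N321 n (hs s).
Proof.
move=> A i j k ij jk kn [h1 h2].
have jn : j < n by lia. have iN : i < n by lia.
rewrite (hsO s iN) (hsO s jn) (hsO s kn) in h1 h2.
move/negP: A; apply; apply/existsP.
exists [ffun a : 'I_3 => nth (Ordinal iN) [:: Ordinal iN; Ordinal jn; Ordinal kn] a].
apply/forallP => a; apply/forallP => b; rewrite !ffunE.
case: a => [[|[|[|a]]] Ha]; case: b => [[|[|[|b]]] Hb] //=; lia.
Qed.

Lemma N2134_of s : avoids s [:: 2; 1; 3; 4] -> N2134 n (hs s).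
Proof.
move=> A i j k l ij jk kl ln [h1 [h2 h3]].
have kn : k < n by lia. have jn : j < n by lia. have iN : i < n by lia.
rewrite (hsO s iN) (hsO s jn) (hsO s kn) (hsO s ln) in h1 h2 h3.
move/negP: A; apply; apply/existsP.
exists [ffun a : 'I_4 => nth (Ordinal iN) [:: Ordinal iN; Ordinal jn; Ordinal kn; Ordinal ln] a].
apply/forallP => a; apply/forallP => b; rewrite !ffunE.
case: a => [[|[|[|[|a]]]] Ha]; case: b => [[|[|[|[|b]]]] Hb] //=; lia.
Qed.

Lemma Nfish_of s : fishburn s -> Nfish n (hs s).
Proof.
move=> A i j ij jn i1n [h1 [h2 h3]].
have iN : i < n by lia.
rewrite (hsO s iN) (hsO s jn) (hsO s i1n) in h1 h2 h3.
move/negP: A; apply; apply/existsP; exists (Ordinal iN); apply/existsP; exists (Ordinal jn).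
apply/existsP; exists (Ordinal i1n); apply/and5P; split => //=; apply/eqP => //.
Qed.

End Conv2.
Ltac splitif := repeat match goal with |- context [if ?b then _ else _] => case: (boolP b) end.

Definition famA n m i := if i < m then i else if i == m then n-1 else i-1.
Definition famB n m t i := if i < m then i else if i == m then n-2 else if i < t then i-1 else if i == t then n-1 else i-2.
Definition famC n m t i := if i < m then i else if i == m then n-3 else if i < t then i-1 else if i == t then n-1 else if i == n-1 then n-2 else i-2.

Section A.
Variables n m : nat.
Hypothesis hm : m < n.
Let F := famA n m.
Lemma A_range i : i < n -> F i < n. Proof. rewrite /F /famA; splitif; lia. Qed.
Lemma A_inj i j : i < n -> j < n -> F i = F j -> i = j. Proof. rewrite /F /famA; splitif; lia. Qed.
Lemma A_desc i j : i < j -> j < n -> F j < F i -> i = m \/ i = m. Proof. rewrite /F /famA; splitif; lia. Qed.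
Lemma A_big k l : m < k -> k < l -> l < n -> F m < F k -> F m < F l -> F l < F k. Proof. rewrite /F /famA; splitif; lia. Qed.
Lemma A_top : F m = n - 1. Proof. rewrite /F /famA; splitif; lia. Qed.
Lemma A_fish i j : i < j -> j < n -> i.+1 < n -> ~ (F j < F i /\ F i < F i.+1 /\ F i = (F j).+1).
Proof. rewrite /F /famA; splitif; lia. Qed.
End A.

Section B.
Variables n m t : nat.
Hypothesis hm : m + 2 <= t.
Hypothesis ht : t <= n - 1.
Let F := famB n m t.
Lemma B_range i : i < n -> F i < n. Proof. rewrite /F /famB; splitif; lia. Qed.
Lemma B_inj i j : i < n -> j < n -> F i = F j -> i = j. Proof. rewrite /F /famB; splitif; lia. Qed.
Lemma B_desc i j : i < j -> j < n -> F j < F i -> i = m \/ i = t. Proof. rewrite /F /famB; splitif; lia. Qed.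
Lemma B_big k l : m < k -> k < l -> l < n -> F m < F k -> F m < F l -> F l < F k. Proof. rewrite /F /famB; splitif; lia. Qed.
Lemma B_top : F t = n - 1. Proof. rewrite /F /famB; splitif; lia. Qed.
Lemma B_ord : F m < F t. Proof. rewrite /F /famB; splitif; lia. Qed.
Lemma B_fish i j : i < j -> j < n -> i.+1 < n -> ~ (F j < F i /\ F i < F i.+1 /\ F i = (F j).+1).
Proof. rewrite /F /famB; splitif; lia. Qed.
End B.

Section C.
Variables n m t : nat.
Hypothesis hm : m + 2 <= t.
Hypothesis ht : t <= n - 2.
Let F := famC n m t.
Lemma C_range i : i < n -> F i < n. Proof. rewrite /F /famC; splitif; lia. Qed.
Lemma C_inj i j : i < n -> j < n -> F i = F j -> i = j. Proof. rewrite /F /famC; splitif; lia. Qed.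
Lemma C_desc i j : i < j -> j < n -> F j < F i -> i = m \/ i = t. Proof. rewrite /F /famC; splitif; lia. Qed.
Lemma C_big k l : m < k -> k < l -> l < n -> F m < F k -> F m < F l -> F l < F k. Proof. rewrite /F /famC; splitif; lia. Qed.
Lemma C_top : F t = n - 1. Proof. rewrite /F /famC; splitif; lia. Qed.
Lemma C_ord : F m < F t. Proof. rewrite /F /famC; splitif; lia. Qed.
Lemma C_fish i j : i < j -> j < n -> i.+1 < n -> ~ (F j < F i /\ F i < F i.+1 /\ F i = (F j).+1).
Proof. rewrite /F /famC; splitif; lia. Qed.
End C.

Definition code n := ('I_n + 'I_(n-2) * 'I_(n-2))%type.

Definition fam n (x : code n) : nat -> nat :=
  match x with
  | inl m => famA n m
  | inr ab => if ab.1 <= ab.2 then famB n ab.1 (ab.2 + 2) else famC n ab.2 (ab.1 + 1)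
  end.

Lemma core n h : 2 <= n ->
  (forall i, i < n -> h i < n) ->
  (forall i j, i < n -> j < n -> h i = h j -> i = j) ->
  (forall v, v < n -> exists2 j, j < n & h j = v) ->
  N321 n h -> N2134 n h -> Nfish n h ->
  exists x : code n, forall i, i < n -> h i = fam x i.
Proof.
move=> n2 hlt hinj hsurj h321 h2134 hfish.
have hneq : forall i j, i < n -> j < n -> i != j -> h i != h j.
  move=> i j iN jn; apply: contra => /eqP e; apply/eqP; exact: hinj.
case: (boolP [exists i : 'I_n, h i != i]) => [ex | nex]; last first.
  have n1 : n - 1 < n by lia.
  exists (inl (Ordinal n1)) => i iN /=.
  move/existsPn: nex => /(_ (Ordinal iN)); rewrite negbK /= => /eqP e.
  rewrite /famA; splitif; lia.
have exm : exists i, (i < n) && (h i != i).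
  by case/existsP: ex => o Ho; exists (val o); rewrite ltn_ord.
case: (ex_minnP exm) => m /andP [mn hm] mmin.
have F1 : forall i, i < m -> h i = i.
  move=> i im; case: (eqVneq (h i) i) => // hi.
  have := mmin i; rewrite hi andbT => H; have := H ltac:(lia); lia.
have F3 : forall j, m <= j -> j < n -> m <= h j.
  move=> j mj jn; rewrite leqNgt; apply/negP => hj.
  have := F1 _ hj => e; have := hinj _ _ (hlt j jn) jn e; lia.
move Ea: (h m) => a.
have F4 : m < a by have := F3 m (leqnn m) mn; lia.
have an : a < n by rewrite -Ea; exact: hlt.
have [m1n hm1] : m.+1 < n /\ h m.+1 = m.
  have [q qn hq] := hsurj (a - 1) ltac:(lia).
  have qm : m < q.
    case: (ltngtP q m) => // [qm|qm].
    - have := F1 q qm; lia.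
    - subst q; rewrite Ea in F4 hq; lia.
  have m1n : m.+1 < n by lia.
  split => //.
  have ha1 : h m.+1 < a.
    case: (ltngtP (h m.+1) a) => // [gt|eq].
    - exfalso; apply: (hfish m q qm qn m1n); rewrite hq; lia.
    - have := hinj _ _ m1n mn (etrans eq (esym Ea)); lia.
  case: (ltngtP (h m.+1) m) => // [lt|gt].
  - have := F3 m.+1 ltac:(lia) m1n; lia.
  - have [r rn hr] := hsurj m ltac:(lia).
    case: (ltngtP r m) => [rm|rm|rm].
    + have := F1 r rm; lia.
    + case: (ltngtP r m.+1) => [r1|r1|r1].
      * lia.
      * exfalso; apply: (h321 m m.+1 r); rewrite ?hr ?Ea; lia.
      * subst r; lia.
    + subst r; rewrite Ea in hr; lia.
have bigpos : forall q, q < n -> a < h q -> m.+1 < q.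
  move=> q qn hq; case: (ltngtP q m) => [qm|qm|qm].
  - have := F1 q qm; lia.
  - case: (ltngtP q m.+1) => [q1|q1|q1]; [lia | done | subst q; lia].
  - subst q; rewrite Ea in hq; lia.
have F6 : forall k l, m.+1 < k -> k < l -> l < n -> a < h k -> a < h l -> h l < h k.
  move=> k l mk kl ln ak al.
  case: (ltngtP (h l) (h k)) => // [lt|eq].
  - exfalso; apply: (h2134 m m.+1 k l); rewrite ?hm1 ?Ea; lia.
  - have := hinj l k ln ltac:(lia) eq; lia.
have F7 : n - 3 <= a.
  rewrite leqNgt; apply/negP => lt.
  have [q1 q1n h1] := hsurj (a + 1) ltac:(lia).
  have [q2 q2n h2] := hsurj (a + 2) ltac:(lia).
  have [q3 q3n h3] := hsurj (a + 3) ltac:(lia).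
  have p1 := bigpos q1 q1n ltac:(lia).
  have p2 := bigpos q2 q2n ltac:(lia).
  have p3 := bigpos q3 q3n ltac:(lia).
  have q21 : q2 < q1.
    case: (ltngtP q2 q1) => // [lt'|eq].
    - have := F6 q1 q2 p1 lt' q2n ltac:(lia) ltac:(lia); lia.
    - subst q2; lia.
  have q32 : q3 < q2.
    case: (ltngtP q3 q2) => // [lt'|eq].
    - have := F6 q2 q3 p2 lt' q3n ltac:(lia) ltac:(lia); lia.
    - subst q3; lia.
  apply: (h321 q3 q2 q1); rewrite ?h1 ?h2 ?h3; lia.
have seg : forall l r d, m.+1 <= l -> m + d <= l -> r <= n ->
    (forall v, m <= v -> v < l - d -> exists2 j, j < l & h j = v) ->
    (forall j, j < l -> h j < l - d \/ a <= h j) ->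
    (forall i, l <= i -> i < r -> h i < a) ->
    forall i, l <= i -> i < r -> h i = i - d.
  move=> l r d ml mdl rn Hatt Hbef Hsm.
  have step : forall i, l <= i -> i < r ->
      (forall i', l <= i' -> i' < i -> h i' = i' - d) -> h i = i - d.
    move=> i li ir IH.
    have iN : i < n by lia.
    have hia := Hsm i li ir.
    have him := F3 i ltac:(lia) iN.
    have lo : i - d <= h i.
      rewrite leqNgt; apply/negP => lt.
      case: (ltnP (h i) (l - d)) => hv.
      - have [j jl hj] := Hatt (h i) him hv.
        have := hinj j i ltac:(lia) iN hj; lia.
      - have := IH (h i + d) ltac:(lia) ltac:(lia) => e.
        have := hinj (h i + d) i ltac:(lia) iN ltac:(lia); lia.
    case: (ltngtP (h i) (i - d)) => [lt|gt|eq]; [lia| |done].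
    have [r' r'n hr'] := hsurj (i - d) ltac:(lia).
    case: (ltnP r' l) => [r'l|lr'].
    - have := Hbef r' r'l; lia.
    case: (ltngtP r' i) => [r'i|ir'|e].
    - have := IH r' lr' r'i; lia.
    - exfalso; apply: (h321 m i r'); rewrite ?hr' ?Ea; lia.
    - subst r'; lia.
  move=> i; elim: i {-2}i (leqnn i) => [|K IHK] i iK li ir.
    apply: step => // i' li' i'i; lia.
  apply: step => // i' li' i'i; apply: IHK => //; lia.
have ainf : forall j, j < m.+1 -> h j < m \/ a <= h j.
  move=> j jm; case: (ltngtP j m) => [jm'|jm'|e]; [have := F1 j jm'; lia | lia | subst j; lia].
have : a = n - 1 \/ a = n - 2 \/ a = n - 3 by lia.
case => [ea|[ea|ea]].
-
  have S := seg m.+1 n 1 (leqnn _) ltac:(lia) (leqnn _)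
    ltac:(move=> v ? ?; lia) ltac:(move=> j jm; have := ainf j jm; lia)
    ltac:(move=> i ? ?; have := hlt i ltac:(lia); have := hneq i m ltac:(lia) mn ltac:(lia); lia).
  exists (inl (Ordinal mn)) => i iN /=.
  case: (ltngtP i m) => [im|im|im].
  + have := F1 i im; rewrite /famA; splitif; lia.
  + have := S i im iN; rewrite /famA; splitif; lia.
  + subst i; rewrite /famA; splitif; lia.
-
  have [t tn ht] := hsurj (n - 1) ltac:(lia).
  have mt := bigpos t tn ltac:(lia).
  have S1 := seg m.+1 t 1 (leqnn _) ltac:(lia) ltac:(lia)
    ltac:(move=> v ? ?; lia) ltac:(move=> j jm; have := ainf j jm; lia)
    ltac:(move=> i ? ?; have := hlt i ltac:(lia); have := hneq i m ltac:(lia) mn ltac:(lia);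
          have := hneq i t ltac:(lia) tn ltac:(lia); lia).
  have S2 := seg t.+1 n 2 ltac:(lia) ltac:(lia) (leqnn _)
    ltac:(move=> v ? ?; exists v.+1; [lia | have := S1 v.+1 ltac:(lia) ltac:(lia); lia])
    ltac:(move=> j jt; case: (ltnP j m.+1) => jm;
           [have := ainf j jm; lia
           | case: (ltngtP j t) => [jt'|jt'|e]; [have := S1 j jm jt'; lia | lia | subst j; lia]])
    ltac:(move=> i ? ?; have := hlt i ltac:(lia); have := hneq i m ltac:(lia) mn ltac:(lia);
          have := hneq i t ltac:(lia) tn ltac:(lia); lia).
  have o1 : m < n - 2 by lia.
  have o2 : t - 2 < n - 2 by lia.
  exists (inr (Ordinal o1, Ordinal o2)) => i iN /=.
  have -> : t - 2 + 2 = t by lia.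
  case: (ltngtP i m) => [im|im|im].
  + have := F1 i im; rewrite /famB; splitif; lia.
  + case: (ltngtP i t) => [it|it|e].
    * have := S1 i im it; rewrite /famB; splitif; lia.
    * have := S2 i it iN; rewrite /famB; splitif; lia.
    * subst i; rewrite /famB ht; splitif; lia.
  + subst i; rewrite /famB; splitif; lia.
-
  have [t tn ht] := hsurj (n - 1) ltac:(lia).
  have [t' t'n ht'] := hsurj (n - 2) ltac:(lia).
  have mt := bigpos t tn ltac:(lia).
  have mt' := bigpos t' t'n ltac:(lia).
  have tt' : t < t'.
    case: (ltngtP t t') => // [lt|eq].
    - have := F6 t' t mt' lt tn ltac:(lia) ltac:(lia); lia.
    - subst t'; lia.
  have et' : t' = n - 1.
    case: (ltngtP t' (n - 1)) => // [lt|gt]; last lia.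
    have := hlt (n - 1) ltac:(lia); have := hneq (n - 1) t ltac:(lia) tn ltac:(lia);
    have := hneq (n - 1) t' ltac:(lia) t'n ltac:(lia) => ? ? ?.
    exfalso; apply: (h321 t t' (n - 1)); lia.
  subst t'.
  have S1 := seg m.+1 t 1 (leqnn _) ltac:(lia) ltac:(lia)
    ltac:(move=> v ? ?; lia) ltac:(move=> j jm; have := ainf j jm; lia)
    ltac:(move=> i ? ?; have := hlt i ltac:(lia); have := hneq i m ltac:(lia) mn ltac:(lia);
          have := hneq i t ltac:(lia) tn ltac:(lia);
          have := hneq i (n - 1) ltac:(lia) t'n ltac:(lia); lia).
  have S2 := seg t.+1 (n - 1) 2 ltac:(lia) ltac:(lia) ltac:(lia)
    ltac:(move=> v ? ?; exists v.+1; [lia | have := S1 v.+1 ltac:(lia) ltac:(lia); lia])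
    ltac:(move=> j jt; case: (ltnP j m.+1) => jm;
           [have := ainf j jm; lia
           | case: (ltngtP j t) => [jt'|jt'|e]; [have := S1 j jm jt'; lia | lia | subst j; lia]])
    ltac:(move=> i ? ?; have := hlt i ltac:(lia); have := hneq i m ltac:(lia) mn ltac:(lia);
          have := hneq i t ltac:(lia) tn ltac:(lia);
          have := hneq i (n - 1) ltac:(lia) t'n ltac:(lia); lia).
  have o1 : t - 1 < n - 2 by lia.
  have o2 : m < n - 2 by lia.
  exists (inr (Ordinal o1, Ordinal o2)) => i iN /=.
  have -> : t - 1 + 1 = t by lia.
  case: (ltngtP i m) => [im|im|im].
  + have := F1 i im; rewrite /famC; splitif; lia.
  + case: (ltngtP i t) => [it|it|e].
    * have := S1 i im it; rewrite /famC; splitif; lia.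
    * case: (ltngtP i (n - 1)) => [it'|it'|e'].
      -- have := S2 i it it'; rewrite /famC; splitif; lia.
      -- lia.
      -- subst i; rewrite /famC ht'; splitif; lia.
    * subst i; rewrite /famC ht; splitif; lia.
  + subst i; rewrite /famC; splitif; lia.
Qed.

Section Spec.
Variable n : nat.
Lemma A_fix m i : i < m -> famA n m i = i. Proof. rewrite /famA; splitif; lia. Qed.
Lemma A_mv m : m < n - 1 -> m < famA n m m. Proof. rewrite /famA; splitif; lia. Qed.
Lemma B_fix m t i : i < m -> famB n m t i = i. Proof. rewrite /famB; splitif; lia. Qed.
Lemma B_val m t : famB n m t m = n - 2. Proof. rewrite /famB; splitif; lia. Qed.
Lemma B_seg m t i : m < i -> i < t -> famB n m t i = i - 1. Proof. rewrite /famB; splitif; lia. Qed.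
Lemma B_tt m t : m < t -> famB n m t t = n - 1. Proof. rewrite /famB; splitif; lia. Qed.
Lemma C_fix m t i : i < m -> famC n m t i = i. Proof. rewrite /famC; splitif; lia. Qed.
Lemma C_val m t : famC n m t m = n - 3. Proof. rewrite /famC; splitif; lia. Qed.
Lemma C_seg m t i : m < i -> i < t -> famC n m t i = i - 1. Proof. rewrite /famC; splitif; lia. Qed.
Lemma C_tt m t : m < t -> famC n m t t = n - 1. Proof. rewrite /famC; splitif; lia. Qed.
End Spec.

Lemma L_m n (F G : nat -> nat) m1 m2 :
  (forall i, i < m1 -> F i = i) -> (forall i, i < m2 -> G i = i) ->
  m1 < n -> m2 < n -> (m1 < n - 1 -> m1 < F m1) -> (m2 < n - 1 -> m2 < G m2) ->
  (forall i, i < n -> F i = G i) -> m1 = m2.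
Proof.
move=> f1 g1 m1n m2n fm gm E.
case: (ltngtP m1 m2) => // [lt|gt].
- have := E m1 m1n; rewrite g1 // => e; have := fm ltac:(lia); lia.
- have := E m2 m2n; rewrite f1 // => e; have := gm ltac:(lia); lia.
Qed.

Lemma L_t n (F G : nat -> nat) m t1 t2 :
  (forall i, m < i -> i < t1 -> F i = i - 1) -> (forall i, m < i -> i < t2 -> G i = i - 1) ->
  F t1 = n - 1 -> G t2 = n - 1 -> m < t1 -> m < t2 -> t1 < n -> t2 < n ->
  (forall i, i < n -> F i = G i) -> t1 = t2.
Proof.
move=> f1 g1 ft gt mt1 mt2 t1n t2n E.
case: (ltngtP t1 t2) => // [lt|lt].
- have := E t1 t1n; rewrite g1 //; lia.
- have := E t2 t2n; rewrite f1 //; lia.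
Qed.

Lemma fam_inj n (x y : code n) : 2 <= n -> (forall i, i < n -> fam x i = fam y i) -> x = y.
Proof.
move=> n2.
case: x => [m|[a b]]; case: y => [m'|[a' b']] /=.
- move=> E; have := @L_m n _ _ m m' (@A_fix n m) (@A_fix n m') (ltn_ord m) (ltn_ord m')
    (@A_mv n m) (@A_mv n m') E => e.
  by congr inl; apply: ord_inj.
- have ha := ltn_ord a'; have hb := ltn_ord b'.
  case: ifP => ab E.
  + have := @L_m n _ _ m a' (@A_fix n m) (@B_fix n a' (b' + 2)) (ltn_ord m) ltac:(lia)
      (@A_mv n m) ltac:(move=> _; rewrite B_val; lia) E => e.
    have := E m (ltn_ord m); rewrite e A_top ?B_val; lia.
  + have := @L_m n _ _ m b' (@A_fix n m) (@C_fix n b' (a' + 1)) (ltn_ord m) ltac:(lia)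
      (@A_mv n m) ltac:(move=> _; rewrite C_val; lia) E => e.
    have := E m (ltn_ord m); rewrite e A_top ?C_val; lia.
- have ha := ltn_ord a; have hb := ltn_ord b.
  case: ifP => ab E.
  + have := @L_m n _ _ a m' (@B_fix n a (b + 2)) (@A_fix n m') ltac:(lia) (ltn_ord m')
      ltac:(move=> _; rewrite B_val; lia) (@A_mv n m') E => e.
    have := E m' (ltn_ord m'); rewrite -e A_top ?B_val; lia.
  + have := @L_m n _ _ b m' (@C_fix n b (a + 1)) (@A_fix n m') ltac:(lia) (ltn_ord m')
      ltac:(move=> _; rewrite C_val; lia) (@A_mv n m') E => e.
    have := E m' (ltn_ord m'); rewrite -e A_top ?C_val; lia.
- have ha := ltn_ord a; have hb := ltn_ord b; have ha' := ltn_ord a'; have hb' := ltn_ord b'.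
  case: ifP => ab; case: ifP => ab' E.
  + have := @L_m n _ _ a a' (@B_fix n a (b + 2)) (@B_fix n a' (b' + 2)) ltac:(lia) ltac:(lia)
      ltac:(move=> _; rewrite B_val; lia) ltac:(move=> _; rewrite B_val; lia) E => e.
    have := @L_t n _ _ a (b + 2) (b' + 2) (@B_seg n a (b + 2)) (@B_seg n a (b' + 2))
      (@B_tt n a (b + 2) ltac:(lia)) (@B_tt n a (b' + 2) ltac:(lia)) ltac:(lia) ltac:(lia) ltac:(lia) ltac:(lia)
      ltac:(move=> i iN; rewrite (E i iN) e //) => e'.
    by congr (inr (_, _)); apply: ord_inj; lia.
  + have := @L_m n _ _ a b' (@B_fix n a (b + 2)) (@C_fix n b' (a' + 1)) ltac:(lia) ltac:(lia)
      ltac:(move=> _; rewrite B_val; lia) ltac:(move=> _; rewrite C_val; lia) E => e.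
    have := E a ltac:(lia); rewrite B_val e C_val; lia.
  + have := @L_m n _ _ b a' (@C_fix n b (a + 1)) (@B_fix n a' (b' + 2)) ltac:(lia) ltac:(lia)
      ltac:(move=> _; rewrite C_val; lia) ltac:(move=> _; rewrite B_val; lia) E => e.
    have := E b ltac:(lia); rewrite C_val e B_val; lia.
  + have := @L_m n _ _ b b' (@C_fix n b (a + 1)) (@C_fix n b' (a' + 1)) ltac:(lia) ltac:(lia)
      ltac:(move=> _; rewrite C_val; lia) ltac:(move=> _; rewrite C_val; lia) E => e.
    have := @L_t n _ _ b (a + 1) (a' + 1) (@C_seg n b (a + 1)) (@C_seg n b (a' + 1))
      (@C_tt n b (a + 1) ltac:(lia)) (@C_tt n b (a' + 1) ltac:(lia)) ltac:(lia) ltac:(lia) ltac:(lia) ltac:(lia)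
      ltac:(move=> i iN; rewrite (E i iN) e //) => e'.
    by congr (inr (_, _)); apply: ord_inj; lia.
Qed.

Lemma N_ext n (F G : nat -> nat) : (forall i, i < n -> G i = F i) ->
  (N321 n F -> N321 n G) /\ (N2134 n F -> N2134 n G) /\ (Nfish n F -> Nfish n G).
Proof.
move=> E; split; [|split].
- move=> H i j k ij jk kn; rewrite !E; [exact: H | lia | lia | lia].
- move=> H i j k l ij jk kl ln; rewrite !E; [exact: H | lia | lia | lia | lia].
- move=> H i j ij jn i1n; rewrite !E; [exact: H | lia | lia | lia].
Qed.

Lemma fam_props n (x : code n) : 2 <= n ->
  (forall i, i < n -> fam x i < n) /\
  (forall i j, i < n -> j < n -> fam x i = fam x j -> i = j) /\
  N321 n (fam x) /\ N2134 n (fam x) /\ Nfish n (fam x).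
Proof.
move=> n2; case: x => [m|[a b]] /=.
- have mn := ltn_ord m.
  have [h1 h2] := @gen_avoid n (famA n m) m m (A_range mn) mn (A_top mn)
     (A_desc mn) (A_big mn) (or_introl erefl).
  do !split => //; [exact: A_range | exact: A_inj | exact: A_fish].
- have ha := ltn_ord a; have hb := ltn_ord b.
  case: ifP => ab.
  + have c1 : a + 2 <= b + 2 by lia.
    have c2 : b + 2 <= n - 1 by lia.
    have [h1 h2] := @gen_avoid n (famB n a (b + 2)) a (b + 2) (B_range c1 c2) ltac:(lia)
      (B_top c1 c2) (B_desc c1 c2) (B_big c1 c2) (or_intror (conj (ltac:(lia) : a < b + 2) (B_ord c1 c2))).
    do !split => //; [exact: B_range | exact: B_inj | exact: B_fish].
  + have c1 : b + 2 <= a + 1 by lia.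
    have c2 : a + 1 <= n - 2 by lia.
    have [h1 h2] := @gen_avoid n (famC n b (a + 1)) b (a + 1) (C_range c1 c2) ltac:(lia)
      (C_top c1 c2) (C_desc c1 c2) (C_big c1 c2) (or_intror (conj (ltac:(lia) : b < a + 1) (C_ord c1 c2))).
    do !split => //; [exact: C_range | exact: C_inj | exact: C_fish].
Qed.

Lemma hs_mkp n (F : nat -> nat) :
  (forall i, i < n -> F i < n) -> (forall i j, i < n -> j < n -> F i = F j -> i = j) ->
  forall i, i < n -> hs (mkp n F) i = F i.
Proof. by move=> rg inj i iN; rewrite (hsO _ iN) mkpE. Qed.

Theorem mainTheorem7 (n : nat) : 2 <= n -> #|F_321_2134 n| = n ^ 2 + 4 - 3 * n.
Proof.
move=> n2.
have E : F_321_2134 n = [set mkp n (fam x) | x : code n].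
  apply/setP => s; apply/idP/idP.
  - rewrite inE => /and3P [hf a1 a2].
    have [x Hx] := core n2 (@hs_range n s) (@hs_inj n s) (@hs_surj n s)
      (N321_of a1) (N2134_of a2) (Nfish_of hf).
    have [rg [inj _]] := fam_props x n2.
    apply/imsetP; exists x => //; apply/permP => o; apply: val_inj.
    by rewrite /= mkpE // -Hx // hsE.
  - case/imsetP => x _ ->.
    have [rg [inj [p1 [p2 p3]]]] := fam_props x n2.
    have [e1 [e2 e3]] := N_ext (hs_mkp rg inj).
    rewrite inE; apply/and3P; split.
    + exact: fish_of (e3 p3).
    + exact: avoid321 (e1 p1).
    + exact: avoid2134 (e2 p2).
have inj : injective (fun x : code n => mkp n (fam x)).
  move=> x y /permP exy; apply: (fam_inj n2) => i iN.
  have [rgx [injx _]] := fam_props x n2.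
  have [rgy [injy _]] := fam_props y n2.
  have := congr1 val (exy (Ordinal iN)); rewrite !mkpE //.
rewrite E card_imset // card_sum card_prod !card_ord.
have -> : n ^ 2 = n * n by rewrite expnS expn1.
nia.
Qed.
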